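(* Any contraction of a left increasing tree is left increasing: if $(T,\lambda)$ is a left increasing tree with $n$ branchings and $A\subseteq[n]$, then the increasing tree $\tau(\sigma(T,\lambda)|_A)$ is left increasing.
   Context: A (planar rooted) tree is a finite planar rooted tree in which each vertex has one outgoing edge and at least two incoming edges (ordered left to right); $\varepsilon$ is the trivial tree. $\bigvee(T_0,\ldots,T_m)$ ($m\ge1$) joins the roots of $T_0,\ldots,T_m$ to a new vertex with a new root. A vertex with $j+1$ incoming edges carries $j$ branchings (pairs of consecutive incoming edges). Branchings are totally ordered left to right recursively: for $T=\bigvee(T_0,\ldots,T_m)$ with root branchings $b_1,\ldots,b_m$, $b_i\prec b\prec b_{i+1}$ for $b$ in $T_i$; the natural labelling is the order-preserving bijection from $[n]=\{1,\ldots,n\}$ to the branchings. A level function is a surjection $\lambda$ from vertices onto $[k]$ strictly increasing along each leaf-to-root path; an increasing tree is $(T,\lambda)$; a branching has the level of its vertex. $\sigma(T,\lambda)=(P_1,\ldots,P_k)$ where $P_i$ is the set of natural labels of branchings at level $i$; $\sigma$ is a bijection from increasing trees with $n$ branchings to set compositions of $[n]$ (tuples of pairwise disjoint non-empty sets with union $[n]$), with inverse $\tau$. For a set composition $P=(P_1,\ldots,P_k)$ of $[n]$ and $A\subseteq[n]$, $P|_A$ is obtained from $(P_1\cap A,\ldots,P_k\cap A)$ by deleting empty entries and relabelling $A$ to $[|A|]$ by the order-preserving bijection. $\mathsf{Inc}$: $\mathsf{Inc}(\varepsilon)=\varepsilon$; if $T=\bigvee(T_0,\ldots,T_m)$ and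 $\mathsf{Inc}(T_i)=(T_i,\lambda_i)$ with $k_i$ levels, then $\mathsf{Inc}(T)=(T,\lambda)$ with $\lambda(v)=k_0+\cdots+k_{i-1}+\lambda_i(v)$ for $v$ in $T_i$ and root vertex level $k_0+\cdots+k_m+1$. An increasing tree is left increasing if it lies in the image of $\mathsf{Inc}$. *)

(* Defs.v *)
From mathcomp Require Import all_boot.
Set Implicit Arguments. Unset Strict Implicit. Unset Printing Implicit Defensive.

(* Planar rooted trees: [Eps] is the trivial tree, [Join ts] = \bigvee(T_0,...,T_m)
   with ts = [:: T_0; ...; T_m]; well-formedness requires m >= 1. *)
Inductive ptree := Eps | Join of seq ptree.

Fixpoint wf_ptree (t : ptree) : bool :=
  match t with Eps => true | Join ts => (2 <= size ts) && all wf_ptree ts end.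

(* Trees whose vertices carry a natural-number label (the level). *)
Inductive itree := IEps | IJoin of nat & seq itree.

Fixpoint vlevels (t : itree) : seq nat :=
  match t with IEps => [::] | IJoin l ts => l :: flatten (map vlevels ts) end.

Definition nlevels (t : itree) : nat := foldr maxn 0 (vlevels t).

Definition root_below (l : nat) (c : itree) : bool :=
  match c with IEps => true | IJoin l' _ => l' < l end.

Fixpoint incr_shape (t : itree) : bool :=
  match t with
  | IEps => true
  | IJoin l ts => [&& 2 <= size ts, all (root_below l) ts & all incr_shape ts]
  end.

(* (T, lambda) is an increasing tree: lambda is a surjection onto [k] = {1..k},
   strictly increasing along leaf-to-root paths. *)
Definition is_increasing (t : itree) : bool :=
  [&& incr_shape t, all (fun v => 0 < v) (vlevels t)
    & all (fun i => i \in vlevels t) (iota 1 (nlevels t))].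

(* Levels of the branchings, listed in the natural (left-to-right) order:
   for \bigvee(T_0,..,T_m) with root level l the order is
   (branchings of T_0), b_1, (branchings of T_1), ..., b_m, (branchings of T_m). *)
Fixpoint blevels (t : itree) : seq nat :=
  match t with
  | IEps => [::]
  | IJoin l ts =>
      match ts with
      | [::] => [::]
      | c0 :: cs => blevels c0 ++ flatten (map (fun c => l :: blevels c) cs)
      end
  end.

Definition nbranch (t : itree) : nat := size (blevels t).

(* Set compositions are represented as sequences of blocks, each block being the
   increasing list of its elements. *)
Definition setcomp := seq (seq nat).

Definition sigma (t : itree) : setcomp :=
  [seq [seq j <- iota 1 (nbranch t) | nth 0 (blevels t) j.-1 == i]
     | i <- iota 1 (nlevels t)].

(* order-preserving bijection A -> [|A|] *)
Definition rank (A : seq nat) (j : nat) : nat := size [seq b <- undup A | b <= j].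

Definition restrict (P : setcomp) (A : seq nat) : setcomp :=
  [seq map (rank A) B | B <- [seq [seq j <- B | j \in A] | B <- P] & B != [::]].

Fixpoint shift (s : nat) (t : itree) : itree :=
  match t with IEps => IEps | IJoin l ts => IJoin (s + l) (map (shift s) ts) end.

(* given the (Inc T_i, k_i), shift T_i by k_0 + ... + k_{i-1}; returns total *)
Fixpoint shift_all (rs : seq (itree * nat)) (acc : nat) : seq itree * nat :=
  match rs with
  | [::] => ([::], acc)
  | r :: rs' => let p := shift_all rs' (acc + r.2) in (shift acc r.1 :: p.1, p.2)
  end.

(* Inc T, together with its number of levels *)
Fixpoint Inc (t : ptree) : itree * nat :=
  match t with
  | Eps => (IEps, 0)
  | Join ts =>
      let p := shift_all (map Inc ts) 0 in (IJoin p.2.+1 p.1, p.2.+1)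
  end.

Definition left_increasing (X : itree) : Prop :=
  exists T : ptree, wf_ptree T /\ (Inc T).1 = X.

(* Main.v *)
Require Import Defs.
From mathcomp Require Import all_boot.
From HB Require Import structures.
From mathcomp Require Import zify.
Set Implicit Arguments. Unset Strict Implicit. Unset Printing Implicit Defensive.

Fixpoint enc (t : itree) : GenTree.tree unit :=
  match t with IEps => GenTree.Node 0 [::] | IJoin l ts => GenTree.Node l.+1 (map enc ts) end.
Fixpoint dect (t : GenTree.tree unit) : itree :=
  match t with GenTree.Node l.+1 ts => IJoin l (map dect ts) | _ => IEps end.
Fixpoint encK (t : itree) : dect (enc t) = t :=
  match t with IEps => erefl | IJoin l ts => f_equal (IJoin l)
   ((fix F (s : seq itree) : map dect (map enc s) = s :=
      match s with [::] => erefl | c :: cs => f_equal2 cons (encK c) (F cs) end) ts) end.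
HB.instance Definition _ := Equality.copy itree (can_type encK).

Fixpoint itree_ind0 (P : itree -> Prop) (H0 : P IEps)
  (H1 : forall l ts, (forall c, List.In c ts -> P c) -> P (IJoin l ts)) (t : itree) : P t :=
  match t with IEps => H0 | IJoin l ts => H1 l ts
   ((fix F (s : seq itree) : forall c, List.In c s -> P c :=
      match s with [::] => fun c H => False_ind _ H
      | c0 :: s' => fun c H => match H with
           | or_introl e => eq_ind c0 P (itree_ind0 H0 H1 c0) c e
           | or_intror H' => F s' c H' end end) ts) end.

Lemma inIn (T : eqType) (x : T) s : x \in s -> List.In x s.
Proof. elim: s => //= y s IH; rewrite inE => /orP[/eqP->|/IH]; [by left|by right]. Qed.

Lemma itree_ind2 (P : itree -> Prop) : P IEps ->
  (forall l ts, (forall c, c \in ts -> P c) -> P (IJoin l ts)) -> forall t, P t.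
Proof. move=> H0 H1; apply: itree_ind0 => // l ts H; apply: H1 => c /inIn; exact: H. Qed.

Fixpoint ptree_ind0 (P : ptree -> Prop) (H0 : P Eps)
  (H1 : forall ts, (forall c, List.In c ts -> P c) -> P (Join ts)) (t : ptree) : P t :=
  match t with Eps => H0 | Join ts => H1 ts
   ((fix F (s : seq ptree) : forall c, List.In c s -> P c :=
      match s with [::] => fun c H => False_ind _ H
      | c0 :: s' => fun c H => match H with
           | or_introl e => eq_ind c0 P (ptree_ind0 H0 H1 c0) c e
           | or_intror H' => F s' c H' end end) ts) end.


Fixpoint post t := match t with IEps => [::] | IJoin l ts => flatten (map post ts) ++ [:: l] end.
Fixpoint erase t := match t with IEps => Eps | IJoin l ts => Join (map erase ts) end.

Lemma post_mem t : post t =i vlevels t.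
Proof.
elim/itree_ind2: t => // l ts IH x /=.
rewrite mem_cat !inE orbC; congr (_ || _).
apply/flatten_mapP/flatten_mapP => -[c cin xin]; exists c => //; by rewrite ?IH // -IH.
Qed.

Lemma vb_mem t : incr_shape t -> vlevels t =i blevels t.
Proof.
elim/itree_ind2: t => // l ts IH /and3P[sz _ /allP ish] x.
case: ts sz IH ish => [|c cs] // sz IH ish.
have IHc : forall c', c' \in c :: cs -> (x \in vlevels c') = (x \in blevels c').
  by move=> c' cin; apply: IH => //; apply: ish.
case: cs sz IH ish IHc => [|c1 cs] // _ IH ish IHc.
have -> : blevels (IJoin l [:: c, c1 & cs]) = blevels c ++ flatten [seq l :: blevels c | c <- c1::cs] by [].
have -> : vlevels (IJoin l [:: c, c1 & cs]) = l :: flatten [seq vlevels c | c <- [:: c, c1 & cs]] by [].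
apply/idP/idP.
- rewrite inE => /orP[/eqP->|/flatten_mapP[c' c'in xin]].
    rewrite mem_cat; apply/orP; right; apply/flatten_mapP; exists c1; first by rewrite mem_head.
    by rewrite mem_head.
  rewrite IHc // in xin.
  move: c'in; rewrite inE => /orP[/eqP Hc|c'in]; first by rewrite mem_cat -Hc xin.
  rewrite mem_cat; apply/orP; right; apply/flatten_mapP; exists c' => //.
  by rewrite inE xin orbT.
- rewrite mem_cat => /orP[xin|/flatten_mapP[c' c'in]].
    rewrite inE; apply/orP; right; apply/flatten_mapP; exists c; first by rewrite mem_head.
    by rewrite IHc ?mem_head.
  rewrite inE => /orP[/eqP->|xin]; first by rewrite inE eqxx.
  rewrite inE; apply/orP; right; apply/flatten_mapP; exists c'; first by rewrite inE c'in orbT.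
  by rewrite IHc // inE c'in orbT.
Qed.

Lemma below t l : incr_shape t -> root_below l t -> forall x, x \in vlevels t -> x < l.
Proof.
elim/itree_ind2: t l => // l' ts IH l /and3P[_ /allP rb /allP ish] ll x.
rewrite inE => /orP[/eqP->//|/flatten_mapP[c cin xin]].
apply: ltn_trans ll; apply: (IH c cin) => //; [exact: ish | exact: rb].
Qed.

Lemma wf_erase t : incr_shape t -> wf_ptree (erase t).
Proof.
elim/itree_ind2: t => // l ts IH /and3P[sz _ /allP ish].
have -> : wf_ptree (erase (IJoin l ts)) = (2 <= size (map erase ts)) && all wf_ptree (map erase ts) by [].
rewrite size_map sz andTb all_map; apply/allP => c cin /=; apply: IH => //; exact: ish.
Qed.


Definition pav (w : seq nat) := forall a c b, subseq [:: a; c; b] w -> ~~ ((a < c) && (b <= a)).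

Lemma pav_sub w1 w2 : subseq w1 w2 -> pav w2 -> pav w1.
Proof. move=> s p a c b h; apply: p; exact: subseq_trans h s. Qed.

Lemma pav_map f w : {in w &, forall x y, (f x < f y) = (x < y)} -> pav w -> pav (map f w).
Proof.
move=> mono p a c b /subseqP[m sz E].
rewrite -map_mask in E.
case Em: (mask m w) E => [|a' [|c' [|b' [|? ?]]]] //= [-> -> ->].
have ina : a' \in w by apply: (@mem_mask _ _ m); rewrite Em !inE eqxx.
have inc : c' \in w by apply: (@mem_mask _ _ m); rewrite Em !inE eqxx orbT.
have inb : b' \in w by apply: (@mem_mask _ _ m); rewrite Em !inE eqxx !orbT.
rewrite (mono a' c' ina inc) (leqNgt (f b')) (mono a' b' ina inb) -leqNgt.
apply: p; rewrite -Em; exact: mask_subseq.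
Qed.

Lemma subseq_catP (s u v : seq nat) : subseq s (u ++ v) ->
  exists s1 s2, [/\ s = s1 ++ s2, subseq s1 u & subseq s2 v].
Proof.
move/subseqP => [m sz ->].
rewrite -(cat_take_drop (size u) m) mask_cat; last first.
  by rewrite size_takel // sz size_cat leq_addr.
by exists (mask (take (size u) m) u), (mask (drop (size u) m) v); split; rewrite ?mask_subseq.
Qed.

Lemma pav_cat u L v : pav u -> pav v -> all (fun x => x < L) u -> all (fun y => y <= L) v ->
  allrel ltn u v -> pav (u ++ L :: v).
Proof.
move=> pu pv /allP Lu /allP Lv /allrelP uv a c b /subseq_catP[s1 [s2 [E S1 S2]]].
have key : forall a b, a \in u -> b \in L :: v -> ~~ (b <= a).
  move=> a0 b0 a0u; rewrite inE -ltnNge => /orP[/eqP->|b0v]; first exact: Lu.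
  exact: uv.
case: s1 E S1 => [|a1 [|c1 [|b1 [|? ?]]]] //= E S1.
- rewrite -E /= in S2.
  case: eqP S2 => [->|_] S2.
    have cv : c \in v by apply: (mem_subseq S2); rewrite mem_head.
    by rewrite negb_and -leqNgt Lv.
  exact: pv.
- case: E => -> E2; rewrite sub1seq in S1.
  rewrite (negbTE (key _ b _ _)) ?andbF //; apply: (mem_subseq S2); by rewrite -E2 !inE eqxx orbT.
- case: E => -> -> E2.
  have au : a1 \in u by apply: (mem_subseq S1); rewrite mem_head.
  rewrite (negbTE (key _ b _ _)) ?andbF //; apply: (mem_subseq S2); by rewrite -E2 !inE eqxx.
- case: E => -> -> -> E2; exact: pu.
Qed.

Lemma pav_cross u L v x y : pav (u ++ L :: v) -> x \in u -> y \in v -> x < L -> x < y.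
Proof.
move=> p xu yv xL; have := p x L y.
have -> : subseq [:: x; L; y] (u ++ L :: v).
  by rewrite -cat1s; apply: cat_subseq; rewrite ?sub1seq //= eqxx sub1seq.
by rewrite xL /= -ltnNge => /(_ isT).
Qed.


Definition W l c cs := blevels c ++ flatten [seq l :: blevels c | c <- cs].

Lemma inS (T : eqType) (y x : T) s : x \in s -> x \in y :: s.
Proof. by move=> h; rewrite inE h orbT. Qed.

Lemma blevelsJ l c cs : blevels (IJoin l (c :: cs)) = W l c cs. Proof. by []. Qed.
Lemma WS l c c1 cs : W l c (c1 :: cs) = blevels c ++ l :: W l c1 cs. Proof. by []. Qed.

Lemma W_sub l c cs c2 x : c2 \in c :: cs -> x \in blevels c2 -> x \in W l c cs.
Proof.
rewrite inE /W mem_cat => /orP[/eqP->->//|c2in xin]; apply/orP; right.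
by apply/flatten_mapP; exists c2 => //; rewrite inE xin orbT.
Qed.

Lemma W_inv l c cs x : x \in W l c cs -> x = l \/ exists2 c2, c2 \in c :: cs & x \in blevels c2.
Proof.
rewrite /W mem_cat => /orP[xin|/flatten_mapP[c2 c2in]]; first by right; exists c; rewrite ?mem_head.
rewrite inE => /orP[/eqP->|xin]; first by left.
by right; exists c2 => //; rewrite inE c2in orbT.
Qed.

Lemma mem_pb t x : incr_shape t -> (x \in post t) = (x \in blevels t).
Proof. by move=> h; rewrite post_mem vb_mem. Qed.

Lemma E2_list l c cs :
  (forall c2, c2 \in c :: cs -> [/\ incr_shape c2, root_below l c2 &
        (pav (blevels c2) -> pairwise ltn (post c2))]) ->
  pav (W l c cs) -> pairwise ltn (flatten (map post (c :: cs))).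
Proof.
elim: cs c => [|c1 cs IH] c H.
  rewrite /W /= !cats0 => p; have [_ _ h] := H c (mem_head _ _); exact: h.
rewrite WS => p.
have [ic rc hc] := H c (mem_head _ _).
have -> : flatten (map post [:: c, c1 & cs]) = post c ++ flatten (map post (c1 :: cs)) by [].
rewrite pairwise_cat; apply/and3P; split.
- apply/allrelP => x y; rewrite mem_pb // => xin /flatten_mapP[c2 c2in yin].
  have [ic2 _ _] := H c2 (inS _ c2in).
  apply: (pav_cross p xin); last by apply: (below ic rc); rewrite vb_mem.
  by apply: (W_sub _ c2in); rewrite -mem_pb.
- apply: hc; apply: pav_sub p; exact: prefix_subseq.
- apply: IH.
    by move=> c2 c2in; apply: H; rewrite inE c2in orbT.
  apply: pav_sub p; apply: subseq_trans (suffix_subseq _ _).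
  by apply: (subseq_cons _ l).
Qed.

Lemma E2 t : incr_shape t -> pav (blevels t) -> pairwise ltn (post t).
Proof.
elim/itree_ind2: t => // l ts IH ish p.
move: (ish) => /and3P[sz /allP rb /allP is2].
case: ts sz IH rb is2 ish p => [|c cs] // sz IH rb is2 ish p.
have -> : post (IJoin l (c :: cs)) = flatten (map post (c :: cs)) ++ [:: l] by [].
rewrite pairwise_cat; apply/and3P; split => //.
- apply/allrelP => x y /flatten_mapP[c2 c2in xin]; rewrite inE => /eqP->.
  apply: (below (is2 _ c2in) (rb _ c2in)); by rewrite -post_mem.
- apply: (E2_list (l := l)) => //; move=> c2 c2in; split; [exact: is2|exact: rb|].
  apply: IH => //; exact: is2.
Qed.

Lemma E1_list l c cs :
  (forall c2, c2 \in c :: cs -> [/\ incr_shape c2, root_below l c2 &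
        (pairwise ltn (post c2) -> pav (blevels c2))]) ->
  pairwise ltn (flatten (map post (c :: cs))) -> pav (W l c cs).
Proof.
elim: cs c => [|c1 cs IH] c H.
  rewrite /W /= !cats0 => p; have [_ _ h] := H c (mem_head _ _); exact: h.
have [ic rc hc] := H c (mem_head _ _).
have -> : flatten (map post [:: c, c1 & cs]) = post c ++ flatten (map post (c1 :: cs)) by [].
rewrite pairwise_cat => /and3P[/allrelP cr pc pr].
rewrite WS; apply: pav_cat.
- exact: hc.
- apply: IH => //; by move=> c2 c2in; apply: H; rewrite inE c2in orbT.
- apply/allP => x xin; apply: (below ic rc); by rewrite vb_mem.
- apply/allP => x /W_inv[->//|[c2 c2in xin]].
  have [ic2 rc2 _] := H c2 (inS _ c2in).
  by apply: ltnW; apply: (below ic2 rc2); rewrite vb_mem.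
- apply/allrelP => x y xin /W_inv[->|[c2 c2in yin]].
    by apply: (below ic rc); rewrite vb_mem.
  have [ic2 rc2 _] := H c2 (inS _ c2in).
  apply: cr; first by rewrite mem_pb.
  by apply/flatten_mapP; exists c2 => //; rewrite mem_pb.
Qed.

Lemma E1 t : incr_shape t -> pairwise ltn (post t) -> pav (blevels t).
Proof.
elim/itree_ind2: t => // l ts IH ish p.
move: (ish) => /and3P[sz /allP rb /allP is2].
case: ts sz IH rb is2 ish p => [|c cs] // sz IH rb is2 ish p.
rewrite blevelsJ.
have E : post (IJoin l (c :: cs)) = flatten (map post (c :: cs)) ++ [:: l] by [].
move: p; rewrite E pairwise_cat => /and3P[_ p _].
apply: (E1_list (l := l)) => //; move=> c2 c2in; split; [exact: is2|exact: rb|].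
apply: IH => //; exact: is2.
Qed.


Lemma IncJ ts : Inc (Join ts) =
  (IJoin (shift_all (map Inc ts) 0).2.+1 (shift_all (map Inc ts) 0).1, (shift_all (map Inc ts) 0).2.+1).
Proof. by []. Qed.

Lemma shift_allC r rs acc : shift_all (r :: rs) acc =
  (shift acc r.1 :: (shift_all rs (acc + r.2)).1, (shift_all rs (acc + r.2)).2).
Proof. by []. Qed.

Lemma postJ l ts : post (IJoin l ts) = flatten (map post ts) ++ [:: l]. Proof. by []. Qed.
Lemma shiftJ s l ts : shift s (IJoin l ts) = IJoin (s + l) (map (shift s) ts). Proof. by []. Qed.

Lemma shiftS a b t : shift a (shift b t) = shift (a + b) t.
Proof.
elim/itree_ind2: t => // l ts IH; rewrite !shiftJ -map_comp addnA; congr IJoin.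
by apply/eq_in_map => c cin /=; rewrite IH.
Qed.

Lemma shift0 t : shift 0 t = t.
Proof.
elim/itree_ind2: t => // l ts IH; rewrite shiftJ add0n; congr IJoin.
by rewrite -[RHS]map_id; apply/eq_in_map => c cin /=; rewrite IH.
Qed.

Lemma post_shift s t : post (shift s t) = map (addn s) (post t).
Proof.
elim/itree_ind2: t => // l ts IH; rewrite shiftJ !postJ map_cat /= map_flatten -!map_comp.
congr (_ ++ _); congr flatten; apply/eq_in_map => c cin /=; exact: IH.
Qed.

Lemma FL ts acc : (forall c, List.In c ts -> post (Inc c).1 = iota 1 (Inc c).2) ->
  flatten (map post (shift_all (map Inc ts) acc).1) = iota acc.+1 (sumn (map (fun c => (Inc c).2) ts))
  /\ (shift_all (map Inc ts) acc).2 = acc + sumn (map (fun c => (Inc c).2) ts).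
Proof.
elim: ts acc => [|c cs IH] acc H; first by rewrite /= addn0.
rewrite map_cons shift_allC /=.
have [IH1 IH2] := IH (acc + (Inc c).2) (fun c2 h => H c2 (or_intror h)).
rewrite IH1 IH2 post_shift (H c (or_introl erefl)); split; last by rewrite addnA.
by rewrite -iotaDl iotaD addn1 addSn.
Qed.

Lemma Fwd T : post (Inc T).1 = iota 1 (Inc T).2.
Proof.
elim/ptree_ind0: T => // ts IH.
have [F1 F2] := @FL ts 0 IH.
rewrite IncJ /= F1 F2 add0n; set N := sumn _.
by rewrite -[RHS]/(iota 1 N.+1) -[in RHS](addn1 N) iotaD.
Qed.

Lemma KL ts acc s :
  (forall c, c \in ts -> forall s, post c = iota s.+1 (size (post c)) ->
       shift s (Inc (erase c)).1 = c /\ (Inc (erase c)).2 = size (post c)) ->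
  flatten (map post ts) = iota (s + acc).+1 (size (flatten (map post ts))) ->
  map (shift s) (shift_all (map Inc (map erase ts)) acc).1 = ts /\
  (shift_all (map Inc (map erase ts)) acc).2 = acc + size (flatten (map post ts)).
Proof.
elim: ts acc => [|c cs IH] acc H; first by rewrite /= addn0.
have -> : flatten (map post (c :: cs)) = post c ++ flatten (map post cs) by [].
rewrite size_cat iotaD => /eqP; rewrite eqseq_cat ?size_iota // => /andP[/eqP E1 /eqP E2].
have [Hc1 Hc2] := H c (mem_head _ _) (s + acc) E1.
rewrite !map_cons shift_allC /=.
have E3 : flatten (map post cs) = iota (s + (acc + (Inc (erase c)).2)).+1 (size (flatten (map post cs))).
  by rewrite {1}E2 Hc2 addnA addSn.
have [IH1 IH2] := IH (acc + (Inc (erase c)).2) (fun c2 h => H c2 (inS _ h)) E3.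
by rewrite IH1 IH2 shiftS Hc1 Hc2 addnA.
Qed.

Lemma Bwd Y s : post Y = iota s.+1 (size (post Y)) ->
  shift s (Inc (erase Y)).1 = Y /\ (Inc (erase Y)).2 = size (post Y).
Proof.
elim/itree_ind2: Y s => // l ts IH s.
rewrite postJ size_cat iotaD => /eqP; rewrite eqseq_cat ?size_iota //.
move=> /andP[/eqP E1 /eqP E2].
have E0 : flatten (map post ts) = iota (s + 0).+1 (size (flatten (map post ts))) by rewrite addn0.
have [K1 K2] := @KL ts 0 s IH E0.
have -> : erase (IJoin l ts) = Join (map erase ts) by [].
rewrite IncJ /= K1 K2 add0n addn1; split => //.
by case: E2 => ->; rewrite addnS addSn.
Qed.


Definition sigmaW (w : seq nat) k : setcomp :=
  [seq [seq j <- iota 1 (size w) | nth 0 w j.-1 == i] | i <- iota 1 k].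

Lemma sigmaE t : sigma t = sigmaW (blevels t) (nlevels t). Proof. by []. Qed.

Definition cov (s : seq nat) k := forall x, (x \in s) = (0 < x <= k).

Lemma max_ge s x : x \in s -> x <= foldr maxn 0 s.
Proof.
elim: s => //= y s IH; rewrite inE => /orP[/eqP->|/IH h]; first exact: leq_maxl.
by apply: leq_trans h (leq_maxr _ _).
Qed.

Lemma max_in s : s != [::] -> foldr maxn 0 s \in s.
Proof.
elim: s => // y s IH _.
have Ms : s != [::] -> foldr maxn 0 s \in s by [].
move: Ms; set M := foldr maxn 0 s => Ms.
change (maxn y M \in y :: s).
rewrite /maxn; case: ltnP => h; last by rewrite mem_head.
rewrite inE /M in h Ms *; clear M; case: s IH Ms h => [|z s] IH Ms h //.
by rewrite Ms ?orbT.
Qed.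

Lemma max_cov s k : cov s k -> foldr maxn 0 s = k.
Proof.
move=> c; case: k c => [|k] c.
  case: s c => // y s c; have := c y; rewrite mem_head; lia.
have kin : k.+1 \in s by rewrite (c k.+1) leqnn.
have ne : s != [::] by case: s kin c.
have := max_in ne; rewrite (c (foldr maxn 0 s)) => /andP[h1 h2]; have := max_ge kin; lia.
Qed.

Lemma inc_cov t : is_increasing t -> cov (vlevels t) (nlevels t) /\ cov (blevels t) (nlevels t).
Proof.
case/and3P=> ish /allP pos /allP sur.
have cv : cov (vlevels t) (nlevels t).
  move=> x; apply/idP/idP => [xin|xr].
    by rewrite pos //=; apply: max_ge.
  by apply: sur; rewrite mem_iota; lia.
by split => // x; rewrite -vb_mem.
Qed.

Lemma cov_inc t k : incr_shape t -> cov (blevels t) k -> is_increasing t /\ nlevels t = k.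
Proof.
move=> ish cb.
have cv : cov (vlevels t) k by move=> x; rewrite vb_mem.
have nk : nlevels t = k by apply: max_cov.
split => //; apply/and3P; split => //.
  by apply/allP => x; rewrite cv => /andP[].
by apply/allP => x; rewrite mem_iota cv nk; lia.
Qed.

Lemma blockP w k i j : 0 < i <= k ->
  (j \in nth [::] (sigmaW w k) i.-1) = (0 < j <= size w) && (nth 0 w j.-1 == i).
Proof.
move=> ik; rewrite /sigmaW (nth_map 0); last by rewrite size_iota; lia.
rewrite nth_iota; last by lia.
rewrite mem_filter mem_iota andbC !add1n prednK; last by case/andP: ik.
by [].
Qed.

Lemma sigmaW_size w1 w2 k : cov w1 k -> sigmaW w1 k = sigmaW w2 k -> size w1 <= size w2.
Proof.
move=> c1 E; case: (posnP (size w1)) => [->//|sz].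
set j := size w1; set i := nth 0 w1 j.-1.
have iin : i \in w1 by apply: mem_nth; rewrite ltn_predL.
have ik : 0 < i <= k by rewrite -(c1 i).
have := blockP w1 j ik; rewrite E blockP // /i eqxx leqnn sz /=.
by move/andP => [].
Qed.

Lemma sigmaW_inj w1 w2 k1 k2 : cov w1 k1 -> cov w2 k2 -> sigmaW w1 k1 = sigmaW w2 k2 -> w1 = w2.
Proof.
move=> c1 c2 E.
have Ek : k1 = k2 by have := congr1 size E; rewrite !size_map !size_iota.
subst k2.
have Esz : size w1 = size w2.
  by apply/eqP; rewrite eqn_leq (sigmaW_size c1 E) (sigmaW_size c2 (esym E)).
apply: (eq_from_nth (x0 := 0)) => // p lp.
set i := nth 0 w1 p.
have iin : i \in w1 by apply: mem_nth.
have ik : 0 < i <= k1 by rewrite -(c1 i).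
have := blockP w1 p.+1 ik; rewrite E blockP // /= eqxx.
by rewrite -Esz lp /= => /eqP ->.
Qed.

Lemma G (s : seq nat) (P : pred nat) : sorted ltn s ->
  map (fun j => count (fun b => b <= j) s) (filter P s) = [seq p <- iota 1 (size s) | P (nth 0 s p.-1)].
Proof.
elim: s => [|x s IH] // srt.
have srt' : sorted ltn s := path_sorted srt.
have gt : all (fun y => x < y) s := order_path_min ltn_trans srt.
have c0 : count (fun b => b <= x) s = 0.
  apply/eqP; rewrite -leqn0 leqNgt -has_count; apply/hasPn => y yin; rewrite -ltnNge.
  exact: (allP gt).
have -> : [seq p <- iota 1 (size (x::s)) | P (nth 0 (x::s) p.-1)] =
   (if P x then [:: 1] else [::]) ++ [seq p <- map succn (iota 1 (size s)) | P (nth 0 (x::s) p.-1)].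
  by rewrite /= -(iotaDl 1); case: (P x).
have -> : filter P (x::s) = (if P x then [:: x] else [::]) ++ filter P s by rewrite /=; case: (P x).
rewrite map_cat filter_map.
have -> : [seq p <- iota 1 (size s) | preim succn (fun p => P (nth 0 (x :: s) p.-1)) p] =
          [seq p <- iota 1 (size s) | P (nth 0 s p.-1)].
  apply/eq_in_filter => p; rewrite mem_iota => /andP[p1 _] /=.
  by case: p p1.
rewrite -IH //; congr (_ ++ _).
  case: (P x) => //=; by rewrite leqnn c0.
rewrite -map_comp; apply/eq_in_map => j; rewrite mem_filter => /andP[_ jin] /=.
by rewrite (ltnW (allP gt j jin)).
Qed.

Lemma count_lt s x y : x < y -> y \in s ->
  count (fun b => b <= x) s < count (fun b => b <= y) s.
Proof.
move=> xy; elim: s => //= z s IH; rewrite inE => /orP[/eqP<-|ys].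
  have := @sub_count _ (fun b => b <= x) (fun b => b <= y) (fun b (h : b <= x) => leq_trans h (ltnW xy)) s.
  rewrite leqnn; case: leqP => h; lia.
have := IH ys; case: (leqP z x) => h1; case: (leqP z y) => h2 /=; lia.
Qed.

Lemma count_le s x y : x <= y ->
  count (fun b => b <= x) s <= count (fun b => b <= y) s.
Proof. move=> xy; apply: sub_count => b h; exact: leq_trans h xy. Qed.


Definition Ap (w : seq nat) (A : seq nat) := [seq j <- iota 1 (size w) | j \in A].
Definition uu w A := [seq nth 0 w j.-1 | j <- Ap w A].
Definition VV w K A := [seq i <- iota 1 K | i \in uu w A].
Definition ff w K A v := count (fun b => b <= v) (VV w K A).
Definition uw w K A := map (ff w K A) (uu w A).

Lemma predlt (j n : nat) : 0 < j -> j < 1 + n -> j.-1 < n.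
Proof. lia. Qed.

Lemma nth_iota_map (w : seq nat) : map (fun j => nth 0 w j.-1) (iota 1 (size w)) = w.
Proof.
rewrite -[1]addn0 iotaDl -map_comp.
rewrite (eq_map (g := nth 0 w)); last by [].
by rewrite map_nth_iota0 // take_size.
Qed.

Lemma V_sorted w K A : sorted ltn (VV w K A).
Proof. apply: sorted_filter; [exact: ltn_trans | exact: iota_ltn_sorted]. Qed.

Lemma Ap_sorted w A : sorted ltn (Ap w A).
Proof. apply: sorted_filter; [exact: ltn_trans | exact: iota_ltn_sorted]. Qed.

Lemma fV w K A : map (ff w K A) (VV w K A) = iota 1 (size (VV w K A)).
Proof.
have := G predT (V_sorted w K A); rewrite filter_predT => ->.
by rewrite -[RHS]filter_predT.
Qed.

Lemma u_in_V w K A : cov w K -> {subset uu w A <= VV w K A}.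
Proof.
move=> c x xu; rewrite /VV mem_filter xu /= mem_iota.
have : x \in w.
  case/mapP: xu => j; rewrite mem_filter mem_iota => /andP[_ /andP[j1 j2]] ->.
  apply: mem_nth; exact: predlt.
rewrite (c x); lia.
Qed.

Lemma fmono w K A : {in VV w K A &, forall x y, (ff w K A x < ff w K A y) = (x < y)}.
Proof.
move=> x y xV yV; apply/idP/idP => h.
  rewrite ltnNge; apply/negP => yx.
  have := count_le (VV w K A) yx; rewrite /ff in h; lia.
exact: count_lt.
Qed.

Lemma finj w K A : {in VV w K A &, injective (ff w K A)}.
Proof.
move=> x y xV yV E; case: (ltngtP x y) => // h.
  by have := fmono xV yV; rewrite h E ltnn.
by have := fmono yV xV; rewrite h E ltnn.
Qed.

Lemma cov_uw w K A : cov w K -> cov (uw w K A) (size (VV w K A)).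
Proof.
move=> c x; apply/idP/idP.
  case/mapP => v vu ->; rewrite -mem_iota -fV; apply: map_f; exact: u_in_V.
rewrite -mem_iota -fV => /mapP[v vV ->]; apply: map_f.
by move: vV; rewrite mem_filter => /andP[].
Qed.

Lemma u_sub w A : subseq (uu w A) w.
Proof. rewrite -{2}(nth_iota_map w); apply: map_subseq; exact: filter_subseq. Qed.

Lemma pav_uw w K A : cov w K -> pav w -> pav (uw w K A).
Proof.
move=> c p; apply: pav_map; last by apply: pav_sub p; exact: u_sub.
move=> x y xu yu; apply: fmono; exact: u_in_V.
Qed.

Lemma rankE w A j : {subset A <= iota 1 (size w)} -> rank A j = count (fun b => b <= j) (Ap w A).
Proof.
move=> sub; rewrite /rank size_filter; apply/permP.
apply: uniq_perm; [exact: undup_uniq | apply: filter_uniq; exact: iota_uniq|].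
move=> x; rewrite mem_undup mem_filter; case xA: (x \in A) => //=; by rewrite sub.
Qed.

Lemma restrictE w K A : cov w K -> {subset A <= iota 1 (size w)} ->
  restrict (sigmaW w K) A = sigmaW (uw w K A) (size (VV w K A)).
Proof.
move=> c sub; rewrite /restrict /sigmaW -map_comp filter_map -map_comp.
rewrite (@eq_in_filter _ _ (fun i => i \in uu w A)); last first.
  move=> i iin /=; rewrite -filter_predI -has_filter.
  apply/hasP/mapP => [[j jin /andP[/= jA /eqP ji]]|[j jin ->]].
    by exists j; rewrite ?ji // mem_filter jA.
  move: jin; rewrite mem_filter => /andP[jA jin]; exists j => //=; by rewrite jA eqxx.
rewrite -/(VV w K A) -fV -map_comp; apply/eq_in_map => i iV /=.
have -> : [seq j <- [seq j <- iota 1 (size w) | nth 0 w j.-1 == i] | j \in A] =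
          [seq j <- Ap w A | nth 0 w j.-1 == i].
  by rewrite /Ap -!filter_predI; apply: eq_filter => j /=; rewrite andbC.
have -> : map (rank A) [seq j <- Ap w A | nth 0 w j.-1 == i] =
     map (fun j => count (fun b => b <= j) (Ap w A)) [seq j <- Ap w A | nth 0 w j.-1 == i].
  by apply/eq_in_map => j _; apply: rankE.
rewrite G; last exact: Ap_sorted.
have szu : size (uw w K A) = size (Ap w A) by rewrite !size_map.
rewrite szu; apply/eq_in_filter => p; rewrite mem_iota => /andP[p1 p2].
have lp : p.-1 < size (Ap w A) by exact: predlt.
rewrite /uw (nth_map 0) ?size_map // /uu (nth_map 0) //.
set x := nth 0 w (nth 0 (Ap w A) p.-1).-1.
have xu : x \in uu w A by rewrite /x -(nth_map 0 0 (fun j => nth 0 w j.-1) lp); apply: mem_nth; rewrite size_map.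
apply/eqP/eqP => [->//|]; apply: finj => //; exact: u_in_V.
Qed.


Fixpoint splitw (m : nat) (w : seq nat) : seq (seq nat) :=
  match w with
  | [::] => [:: [::]]
  | x :: w' => let r := splitw m w' in
      if x == m then [::] :: r else (x :: head [::] r) :: behead r
  end.

Lemma splitw_cons m w : splitw m w = head [::] (splitw m w) :: behead (splitw m w).
Proof. by case: w => //= x w; case: (x == m). Qed.

Lemma splitw_flat m w : w = head [::] (splitw m w) ++ flatten (map (cons m) (behead (splitw m w))).
Proof.
elim: w => //= x w IH; case: eqP => [->|_] /=; first by rewrite {1}IH splitw_cons.
by rewrite {1}IH.
Qed.

Lemma splitw_size m w : size (splitw m w) = (count_mem m w).+1.
Proof.
elim: w => //= x w IH; rewrite eq_sym; case: eqP => _ /=; first by rewrite IH.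
by rewrite (splitw_cons m w) /= in IH; rewrite IH.
Qed.

Lemma splitw_mem m w s x : s \in splitw m w -> x \in s -> (x \in w) && (x != m).
Proof.
elim: w s => [|y w IH] s /=; first by rewrite inE => /eqP->.
case: eqP => [ym|ym].
  rewrite inE => /orP[/eqP->//|sin xin]; have /andP[h1 h2] := IH _ sin xin.
  by rewrite inE h1 orbT.
rewrite inE => /orP[/eqP->|sin].
  rewrite inE => /orP[/eqP->|xin]; first by rewrite mem_head; apply/eqP.
  rewrite splitw_cons in IH; have /andP[h1 h2] := IH _ (mem_head _ _) xin.
  by rewrite inE h1 orbT.
move=> xin; rewrite splitw_cons in IH; have /andP[h1 h2] := IH s (inS _ sin) xin.
by rewrite inE h1 orbT.
Qed.

Lemma splitw_le m w s : s \in splitw m w -> size s <= size w.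
Proof.
elim: w s => [|y w IH] s /=; first by rewrite inE => /eqP->.
case: eqP => _.
  by rewrite inE => /orP[/eqP->//|/IH h]; apply: leq_trans h _.
rewrite inE => /orP[/eqP->|sin] /=.
  by rewrite ltnS; apply: IH; rewrite splitw_cons mem_head.
apply: leq_trans (leqnSn _); apply: IH; rewrite splitw_cons; exact: inS.
Qed.

Lemma splitw_lt m w s : m \in w -> s \in splitw m w -> size s < size w.
Proof.
elim: w s => [|y w IH] s //=.
case: eqP => [ym|ym] min.
  by rewrite inE => /orP[/eqP->//|/splitw_le h].
have mw : m \in w by move: min; rewrite inE eq_sym; case: eqP.
rewrite inE => /orP[/eqP->|sin] /=.
  by rewrite ltnS; apply: IH => //; rewrite splitw_cons mem_head.
apply: ltn_trans (ltnSn _); apply: IH => //; rewrite splitw_cons; exact: inS.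
Qed.

Fixpoint dec (n : nat) (w : seq nat) : itree :=
  match n with
  | 0 => IEps
  | n'.+1 => if w is [::] then IEps
             else IJoin (foldr maxn 0 w) (map (dec n') (splitw (foldr maxn 0 w) w))
  end.

Lemma dec_rb n w l : (forall x, x \in w -> x < l) -> root_below l (dec n w).
Proof.
case: n => // n; case: w => // x w H; apply: (H (foldr maxn 0 (x :: w))); exact: max_in.
Qed.

Lemma decodeP n w : size w <= n -> blevels (dec n w) = w /\ incr_shape (dec n w).
Proof.
elim: n w => [|n IH] w.
  by case: w.
case: w => [|x w'] // sz.
set w := x :: w'.
have -> : dec n.+1 w = IJoin (foldr maxn 0 w) (map (dec n) (splitw (foldr maxn 0 w) w)) by [].
set m := foldr maxn 0 w.
have min : m \in w by apply: max_in.
have IHs : forall s, s \in splitw m w -> blevels (dec n s) = s /\ incr_shape (dec n s).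
  move=> s sin; apply: IH; have := splitw_lt min sin; rewrite /w /= in sz *; lia.
have hin : head [::] (splitw m w) \in splitw m w by rewrite [X in _ \in X]splitw_cons mem_head.
have bin : forall s, s \in behead (splitw m w) -> s \in splitw m w.
  by move=> s h; rewrite splitw_cons inS.
rewrite splitw_cons map_cons blevelsJ; split.
  rewrite [RHS](splitw_flat m w) /W (IHs _ hin).1 -map_comp; congr (_ ++ _).
  congr flatten; apply/eq_in_map => s sin /=; rewrite (IHs s (bin _ sin)).1 //.
rewrite -map_cons -splitw_cons; apply/and3P; split.
- by rewrite size_map splitw_size ltnS -has_count; apply/hasP; exists m => //=.
- apply/allP => c /mapP[s sin ->]; apply: dec_rb => y yin.
  have /andP[xw xm] := splitw_mem sin yin.
  by rewrite ltn_neqAle xm max_ge.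
- apply/allP => c /mapP[s sin ->]; exact: (IHs s sin).2.
Qed.


Unset Implicit Arguments.

Theorem corollary4p7 (X : itree) (A : seq nat) :
  is_increasing X -> left_increasing X ->
  {subset A <= iota 1 (nbranch X)} ->
  (exists Y, is_increasing Y /\ sigma Y = restrict (sigma X) A) /\
  (forall Y, is_increasing Y -> sigma Y = restrict (sigma X) A -> left_increasing Y).
Proof.
move=> incX [T [wfT EX]] sub.
have [_ cw] := inc_cov incX.
have ishX : incr_shape X by case/and3P: incX.
have pX : pav (blevels X).
  apply: E1 => //; rewrite -EX Fwd -(sorted_pairwise ltn_trans); exact: iota_ltn_sorted.
have RE : restrict (sigma X) A =
   sigmaW (uw (blevels X) (nlevels X) A) (size (VV (blevels X) (nlevels X) A)).
  by rewrite sigmaE restrictE.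
have cu := @cov_uw _ _ A cw.
have pu := @pav_uw _ _ A cw pX.
split.
  set u := uw _ _ _ in cu pu RE.
  have [bY iY] := @decodeP (size u) u (leqnn _).
  have cbY : cov (blevels (dec (size u) u)) (size (VV (blevels X) (nlevels X) A)) by rewrite bY.
  have [incY nY] := cov_inc iY cbY.
  by exists (dec (size u) u); split => //; rewrite sigmaE bY nY RE.
move=> Y incY sY.
have [cvY cY] := inc_cov incY.
have ishY : incr_shape Y by case/and3P: incY.
have bY : blevels Y = uw (blevels X) (nlevels X) A.
  by apply: sigmaW_inj cY cu _; rewrite -sigmaE sY RE.
have pY : pairwise ltn (post Y) by apply: E2 => //; rewrite bY.
have PE : post Y = iota 1 (nlevels Y).
  apply: (irr_sorted_eq ltn_trans ltnn).
  - by rewrite (sorted_pairwise ltn_trans).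
  - exact: iota_ltn_sorted.
  - by move=> x; rewrite post_mem cvY mem_iota add1n ltnS.
have PE' : post Y = iota 0.+1 (size (post Y)) by rewrite {2}PE size_iota.
have [B1 _] := Bwd PE'.
exists (erase Y); split; first exact: wf_erase.
by rewrite -[RHS]B1 shift0.
Qed.
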